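(* Let $m\ge2$, let $\mathbf A$ be the $(m-1)\times(m-1)$ tridiagonal matrix with $2$ on the diagonal and $-1$ on the sub- and super-diagonals, and let $\mathbf x(\varepsilon)$ be the solution of $e^{-\mathbf x}=\frac{\varepsilon^2}{8}\mathbf A^{-1}\mathbf x$ satisfying $\mathbf x=-2\log(\varepsilon)\mathbf 1-\log|\log\varepsilon|\mathbf 1+2\log(2)\mathbf 1-\log(\mathbf A^{-1}\mathbf 1)+o(1)$. Put $\mathbf w=\mathbf A^{-1}\mathbf x$ and consider the eigenvalue problem for $(\omega^2,\xi)$, $\xi\in\mathbb R^{m-1}\setminus\{0\}$: $$ (2-\omega^2)\xi_j-2\big(w_{j+1}\xi_{j+1}-2w_j\xi_j+w_{j-1}\xi_{j-1}\big)=0,\quad j=1,\dots,m-1, $$ with the convention $w_0\xi_0=w_m\xi_m=0$. Then for sufficiently small $\varepsilon>0$ its $m-1$ eigenvalues can be labelled $\omega_1^2,\dots,\omega_{m-1}^2$ so that $$ \omega_n^2=2+\big(-4\log\varepsilon-2\log|\log\varepsilon|+4\log2\big)\frac{n(n+1)}{2}+\mathcal O(1)\quad\text{as }\varepsilon\to0,\qquad n=1,\dots,m-1 . $$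
   Context: For a vector $\mathbf y$, $\log\mathbf y$ denotes the componentwise logarithm; $\mathbf 1=(1,\dots,1)^T\in\mathbb R^{m-1}$. The values $n(n+1)/2$, $n=1,\dots,m-1$, form the set $\{1,3,6,\dots,m(m-1)/2\}$. *)

(* Defs.v *)
From Stdlib Require Import Reals Lra Lia Arith ClassicalEpsilon.
Open Scope R_scope.

(* Vectors in R^(m-1) are functions nat -> R indexed by j = 1..m-1.
   [ext m v] extends v by zero outside 1..m-1 (convention v_0 = v_m = 0). *)
Definition in_range (m j : nat) : Prop := (1 <= j /\ j <= m - 1)%nat.

Definition ext (m : nat) (v : nat -> R) (j : nat) : R :=
  if andb (Nat.leb 1 j) (Nat.leb j (m - 1)) then v j else 0.

Definition Amul (m : nat) (v : nat -> R) (j : nat) : R :=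
  2 * ext m v j - ext m v (j - 1)%nat - ext m v (j + 1)%nat.

Definition Ainv (m : nat) (x : nat -> R) : nat -> R :=
  epsilon (inhabits (fun _ : nat => 0))
    (fun w => forall j, in_range m j -> Amul m w j = x j).

Definition is_eigenvalue (m : nat) (w : nat -> R) (lam : R) : Prop :=
  exists xi : nat -> R,
    (exists j, in_range m j /\ xi j <> 0) /\
    forall j, in_range m j ->
      let wxi := ext m (fun i => w i * xi i) in
      (2 - lam) * xi j - 2 * (wxi (j + 1)%nat - 2 * wxi j + wxi (j - 1)%nat) = 0.

(* Main.v *)
Require Import Defs.
From Stdlib Require Import Reals Lra Lia Arith ClassicalEpsilon List.
Open Scope R_scope.

Fixpoint sumR (f : nat -> R) (n : nat) : R :=
  match n with O => 0 | S n' => sumR f n' + f n' end.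

Lemma sumR_S f n : sumR f (S n) = sumR f n + f n. Proof. reflexivity. Qed.

Lemma sumR_ext f g n : (forall k, (k < n)%nat -> f k = g k) -> sumR f n = sumR g n.
Proof. induction n; simpl; intros H; auto. rewrite IHn; [rewrite H|]; auto; intros; apply H; lia. Qed.

Lemma sumR_plus f g n : sumR (fun k => f k + g k) n = sumR f n + sumR g n.
Proof. induction n; simpl; [lra|rewrite IHn; lra]. Qed.

Lemma sumR_minus f g n : sumR (fun k => f k - g k) n = sumR f n - sumR g n.
Proof. induction n; simpl; [lra|rewrite IHn; lra]. Qed.

Lemma sumR_scal a f n : sumR (fun k => a * f k) n = a * sumR f n.
Proof. induction n; simpl; [lra|rewrite IHn; lra]. Qed.

Lemma sumR_shift f n : sumR f (S n) = f O + sumR (fun k => f (S k)) n.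
Proof. induction n; simpl in *; [lra|rewrite IHn; lra]. Qed.

Lemma sumR_tele h n : sumR (fun k => h k - h (S k)) n = h O - h n.
Proof. induction n; simpl; [lra|rewrite IHn; lra]. Qed.

Fixpoint B (n k : nat) : R :=
  match n, k with
  | _, O => 1
  | O, S _ => 0
  | S n', S k' => B n' k' + B n' (S k')
  end.

Lemma B_gt n k : (n < k)%nat -> B n k = 0.
Proof.
  revert k; induction n; intros k H; destruct k; try lia; simpl; auto.
  rewrite !IHn; try lia; lra.
Qed.

Lemma B_0 n : B n 0 = 1. Proof. destruct n; reflexivity. Qed.

Lemma B_1 n : B n 1 = INR n.
Proof. induction n; simpl; auto. rewrite IHn, B_0. destruct n; simpl; lra. Qed.

Lemma B_absorb j k : (INR j + 1) * B j k = (INR k + 1) * B (S j) (S k).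
Proof.
  revert k; induction j; intros k.
  - simpl. destruct k; simpl; lra.
  - destruct k.
    + change (B (S (S j)) 1) with (B (S j) 0 + B (S j) 1). rewrite B_1, !B_0.
      rewrite S_INR; simpl; lra.
    + change (B (S (S j)) (S (S k))) with (B (S j) (S k) + B (S j) (S (S k))).
      change (B (S j) (S k)) with (B j k + B j (S k)).
      pose proof (IHj k) as H1. pose proof (IHj (S k)) as H2.
      change (B (S j) (S k)) with (B j k + B j (S k)) in H1.
      rewrite !S_INR in *. nra.
Qed.

Lemma B_shift n r : (INR n - INR r) * B n r = (INR r + 1) * B n (S r).
Proof.
  destruct n.
  - destruct r; simpl; lra.
  - rewrite <- B_absorb. destruct r.
    + rewrite !B_0. rewrite S_INR; simpl; lra.
    + change (B (S n) (S r)) with (B n r + B n (S r)).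
      pose proof (B_absorb n r) as H.
      change (B (S n) (S r)) with (B n r + B n (S r)) in H.
      rewrite !S_INR in *. lra.
Qed.

Fixpoint rc (c : nat -> R) (s : R) (n : nat) : R * R :=
  match n with
  | O => (0, 1)
  | S n' => let p := rc c s n' in (snd p, 2 * snd p - fst p - s * snd p / c (S n'))
  end.
Definition U c s n := fst (rc c s n).

Lemma U_0 c s : U c s 0 = 0. Proof. reflexivity. Qed.
Lemma U_1 c s : U c s 1 = 1. Proof. reflexivity. Qed.
Lemma U_SS c s n : U c s (S (S n)) = 2 * U c s (S n) - U c s n - s * U c s (S n) / c (S n).
Proof. unfold U. simpl. reflexivity. Qed.

Fixpoint gam (m : nat) (s : R) (k : nat) : R :=
  match k with
  | O => 1
  | S k' => gam m s k' * (INR k' * (INR k' + 1) - s) / ((INR k' + 1) * (INR m - INR k' - 1))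
  end.

Lemma INR_le_lt a b : (a + 1 <= b)%nat -> INR a + 1 <= INR b.
Proof. intros H. apply le_INR in H. rewrite plus_INR in H. simpl in H. lra. Qed.

Lemma gam_S m s k : (k + 2 <= m)%nat ->
  gam m s (S k) * ((INR k + 1) * (INR m - INR k - 1)) = gam m s k * (INR k * (INR k + 1) - s).
Proof.
  intros H. assert (H1 : INR k + 2 <= INR m).
  { apply le_INR in H. rewrite plus_INR in H. simpl in H. lra. }
  pose proof (pos_INR k). simpl. field. lra.
Qed.

Definition c0 (m : nat) (j : nat) : R := INR j * (INR m - INR j).
Definition F (m : nat) (s : R) (j : nat) : R := sumR (fun k => gam m s k * B j (S k)) m.

Lemma sumR_lin3 f g h n : sumR f n - 2 * sumR g n + sumR h n = sumR (fun k => f k - 2 * g k + h k) n.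
Proof. induction n; simpl; lra. Qed.

Lemma F_rec m s j : (j + 2 <= m)%nat ->
  c0 m (S j) * (F m s (S (S j)) - 2 * F m s (S j) + F m s j) + s * F m s (S j) = 0.
Proof.
  intros Hm. destruct m as [|N]; [lia|].
  unfold F. rewrite sumR_lin3.
  rewrite sumR_shift.
  replace (gam (S N) s 0 * B (S (S j)) 1 - 2 * (gam (S N) s 0 * B (S j) 1) + gam (S N) s 0 * B j 1)
    with 0 by (rewrite !B_1, !S_INR; ring).
  rewrite Rplus_0_l.
  set (h := fun k => gam (S N) s k * (INR k * (INR k + 1)) * B (S j) (S k)).
  assert (E : forall k, (k < N)%nat ->
    c0 (S N) (S j) * (gam (S N) s (S k) * B (S (S j)) (S (S k)) -
      2 * (gam (S N) s (S k) * B (S j) (S (S k))) + gam (S N) s (S k) * B j (S (S k)))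
    = (h k - h (S k)) - s * (gam (S N) s k * B (S j) (S k))).
  { intros k Hk.
    assert (P1 : B (S (S j)) (S (S k)) = B (S j) (S k) + B (S j) (S (S k))) by reflexivity.
    assert (P2 : B (S j) (S k) = B j k + B j (S k)) by reflexivity.
    assert (P3 : B (S j) (S (S k)) = B j (S k) + B j (S (S k))) by reflexivity.
    assert (D : B (S (S j)) (S (S k)) - 2 * B (S j) (S (S k)) + B j (S (S k)) = B j k) by lra.
    replace (gam (S N) s (S k) * B (S (S j)) (S (S k)) -
      2 * (gam (S N) s (S k) * B (S j) (S (S k))) + gam (S N) s (S k) * B j (S (S k)))
      with (gam (S N) s (S k) * (B (S (S j)) (S (S k)) - 2 * B (S j) (S (S k)) + B j (S (S k)))) by ring.
    rewrite D. unfold c0, h.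
    pose proof (B_absorb j k) as A1.
    pose proof (B_shift (S j) (S k)) as A2.
    pose proof (gam_S (S N) s k ltac:(lia)) as G.
    rewrite !S_INR in *.
    transitivity (gam (S N) s (S k) * (INR k + 1) * ((INR N + 1 - (INR j + 1)) * B (S j) (S k))).
    { transitivity (gam (S N) s (S k) * (INR N + 1 - (INR j + 1)) * ((INR j + 1) * B j k)). ring.
      rewrite A1. ring. }
    replace (INR N + 1 - (INR j + 1)) with ((INR N + 1 - (INR k + 1)) - ((INR j + 1) - (INR k + 1))) by ring.
    replace ((INR N + 1 - (INR k + 1) - (INR j + 1 - (INR k + 1))) * B (S j) (S k))
      with ((INR N + 1 - INR k - 1) * B (S j) (S k) - (INR k + 1 + 1) * B (S j) (S (S k))) by (rewrite <- A2; ring).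
    transitivity (gam (S N) s (S k) * ((INR k + 1) * (INR N + 1 - INR k - 1)) * B (S j) (S k)
       - gam (S N) s (S k) * (INR k + 1) * (INR k + 1 + 1) * B (S j) (S (S k))); [ring|].
    rewrite G. ring. }
  rewrite <- sumR_scal. rewrite (sumR_ext _ _ _ E). rewrite sumR_minus, sumR_tele.
  unfold h. simpl (INR 0). rewrite (B_gt (S j) (S N)) by lia.
  rewrite sumR_scal, (sumR_S (fun k => gam (S N) s k * B (S j) (S k)) N).
  rewrite (B_gt (S j) (S N)) by lia. ring.
Qed.

Lemma F_0 m s : F m s 0 = 0.
Proof. unfold F. generalize m at 2. induction m0; auto. rewrite sumR_S, IHm0. simpl. lra. Qed.

Lemma F_1 m s : (1 <= m)%nat -> F m s 1 = 1.
Proof.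
  intros H. unfold F. destruct m; [lia|]. rewrite sumR_shift. simpl gam.
  rewrite (sumR_ext _ (fun _ => 0)).
  - clear. assert (sumR (fun _ => 0) m = 0) by (induction m; simpl; lra). rewrite H. simpl. lra.
  - intros k _. rewrite B_gt by lia. lra.
Qed.

Lemma c0_pos m j : (1 <= j)%nat -> (j + 1 <= m)%nat -> 0 < c0 m j.
Proof.
  intros H1 H2. unfold c0. apply le_INR in H1. apply INR_le_lt in H2. simpl in H1.
  apply Rmult_lt_0_compat; lra.
Qed.

Lemma U_F m s : forall j, (j + 1 <= m)%nat -> U (c0 m) s j = F m s j /\ U (c0 m) s (S j) = F m s (S j).
Proof.
  induction j; intros H.
  - rewrite U_0, U_1, F_0, F_1 by lia. auto.
  - destruct IHj as [I1 I2]; [lia|]. split; auto.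
    rewrite U_SS, I1, I2.
    pose proof (F_rec m s j ltac:(lia)). pose proof (c0_pos m (S j) ltac:(lia) ltac:(lia)).
    field_simplify_eq; [|lra]. lra.
Qed.

Fixpoint tau (m : nat) (s : R) (k : nat) : R :=
  match k with
  | O => INR m
  | S k' => tau m s k' * (INR k' * (INR k' + 1) - s) / ((INR k' + 1) * (INR k' + 2))
  end.

Lemma gamB_tau m s : forall k, (k < m)%nat -> gam m s k * B m (S k) = tau m s k.
Proof.
  induction k; intros H.
  - simpl. rewrite B_1. ring.
  - pose proof (IHk ltac:(lia)) as IH.
    pose proof (gam_S m s k ltac:(lia)) as G.
    pose proof (B_shift m (S k)) as Bs.
    assert (H1 : INR k + 2 <= INR m) by (apply le_INR in H; rewrite !S_INR in H; lra).
    pose proof (pos_INR k).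
    apply (Rmult_eq_reg_r ((INR k + 1) * (INR k + 2) * (INR m - INR k - 1))); [|
      apply Rmult_integral_contrapositive; split; [apply Rmult_integral_contrapositive; split|]; lra].
    change (tau m s (S k)) with (tau m s k * (INR k * (INR k + 1) - s) / ((INR k + 1) * (INR k + 2))).
    rewrite S_INR in Bs.
    transitivity ((gam m s (S k) * ((INR k + 1) * (INR m - INR k - 1))) * ((INR k + 1 + 1) * B m (S (S k)))).
    { ring. }
    rewrite G, <- Bs, <- IH. field. lra.
Qed.

Fixpoint Qp (s : R) (N : nat) : R :=
  match N with
  | O => 1
  | S N' => Qp s N' * (1 - s / ((INR N' + 1) * (INR N' + 2)))
  end.

Lemma tau_sum m s : forall N, sumR (tau m s) (S N) = INR m * Qp s N /\
   tau m s (S N) = - s * INR m * Qp s N / ((INR N + 1) * (INR N + 2)).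
Proof.
  induction N.
  - simpl. split; field.
  - destruct IHN as [I1 I2]. pose proof (pos_INR N).
    split.
    + rewrite sumR_S, I1, I2. simpl Qp. rewrite ?S_INR. field. lra.
    + change (tau m s (S (S N))) with
        (tau m s (S N) * (INR (S N) * (INR (S N) + 1) - s) / ((INR (S N) + 1) * (INR (S N) + 2))).
      rewrite I2. simpl Qp. rewrite ?S_INR. field. lra.
Qed.

Lemma V0_closed m s : (2 <= m)%nat -> U (c0 m) s m = INR m * Qp s (m - 1).
Proof.
  intros Hm. destruct m as [|m']; [lia|].
  destruct (U_F (S m') s m' ltac:(lia)) as [_ H]. rewrite H.
  unfold F. rewrite (sumR_ext _ (tau (S m') s)).
  - replace (S m' - 1)%nat with m' by lia. apply tau_sum.
  - intros k Hk. apply gamB_tau; lia.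
Qed.

Lemma Rabs_le_inv a b : Rabs a <= b -> - b <= a <= b.
Proof. unfold Rabs; destruct (Rcase_abs a); lra. Qed.
Lemma Rabs_lt_inv a b : Rabs a < b -> - b < a < b.
Proof. unfold Rabs; destruct (Rcase_abs a); lra. Qed.

Lemma factor_prop (n k : nat) : (1 <= n)%nat -> (1 <= k)%nat -> k <> n ->
  forall s, Rabs (s - INR n * (INR n + 1)) <= 1 ->
   1 / (INR k * (INR k + 1)) <= Rabs (1 - s / (INR k * (INR k + 1))) /\
   (1 - s / (INR k * (INR k + 1))) * (1 - INR n * (INR n + 1) / (INR k * (INR k + 1))) > 0.
Proof.
  intros Hn Hk Hkn s Hs.
  assert (Hk1 : 1 <= INR k) by (apply le_INR in Hk; simpl in Hk; lra).
  assert (Hkk : 0 < INR k * (INR k + 1)) by nra.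
  apply Rabs_le_inv in Hs.
  destruct (Nat.lt_ge_cases n k) as [H|H].
  - assert (H' : INR n + 1 <= INR k) by (apply INR_le_lt; lia).
    assert (Hn1 : 1 <= INR n) by (apply le_INR in Hn; simpl in Hn; lra).
    assert (E : INR k * (INR k + 1) - s >= 3) by nra.
    assert (E2 : INR k * (INR k + 1) - INR n * (INR n + 1) >= 4) by nra.
    replace (1 - s / (INR k * (INR k + 1))) with ((INR k * (INR k + 1) - s) / (INR k * (INR k + 1))) by (field; lra).
    replace (1 - INR n * (INR n + 1) / (INR k * (INR k + 1))) with
      ((INR k * (INR k + 1) - INR n * (INR n + 1)) / (INR k * (INR k + 1))) by (field; lra).
    split.
    + rewrite Rabs_right.
      * unfold Rdiv. apply Rmult_le_compat_r; [left; apply Rinv_0_lt_compat; lra| lra].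
      * unfold Rdiv. apply Rle_ge, Rmult_le_pos; [lra|left; apply Rinv_0_lt_compat; lra].
    + unfold Rdiv. assert (0 < / (INR k * (INR k + 1))) by (apply Rinv_0_lt_compat; lra).
      apply Rlt_gt. repeat apply Rmult_lt_0_compat; lra.
  - assert (H' : INR k + 1 <= INR n) by (apply INR_le_lt; lia).
    assert (E : INR k * (INR k + 1) - s <= -3) by nra.
    assert (E2 : INR k * (INR k + 1) - INR n * (INR n + 1) <= -4) by nra.
    replace (1 - s / (INR k * (INR k + 1))) with ((INR k * (INR k + 1) - s) / (INR k * (INR k + 1))) by (field; lra).
    replace (1 - INR n * (INR n + 1) / (INR k * (INR k + 1))) with
      ((INR k * (INR k + 1) - INR n * (INR n + 1)) / (INR k * (INR k + 1))) by (field; lra).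
    assert (0 < / (INR k * (INR k + 1))) by (apply Rinv_0_lt_compat; lra).
    assert ((INR k * (INR k + 1) - s) * / (INR k * (INR k + 1)) <= -3 * / (INR k * (INR k + 1)))
      by (apply Rmult_le_compat_r; lra).
    split.
    + rewrite Rabs_left.
      * unfold Rdiv. lra.
      * unfold Rdiv. lra.
    + unfold Rdiv. apply Rlt_gt.
      assert ((INR k * (INR k + 1) - INR n * (INR n + 1)) * / (INR k * (INR k + 1)) <= -4 * / (INR k * (INR k + 1)))
        by (apply Rmult_le_compat_r; lra). nra.
Qed.

Lemma Qp_factor (n : nat) : (1 <= n)%nat -> forall N, exists (G : R -> R) (kap : R), 0 < kap /\
  (forall s, Qp s N = (if Nat.leb n N then 1 - s / (INR n * (INR n + 1)) else 1) * G s) /\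
  (forall s, Rabs (s - INR n * (INR n + 1)) <= 1 ->
     kap <= Rabs (G s) /\ G s * G (INR n * (INR n + 1)) > 0).
Proof.
  intros Hn. induction N.
  - exists (fun _ => 1), 1. split; [lra|]. split.
    + intros s. destruct n; [lia|]. simpl. lra.
    + intros s _. rewrite Rabs_R1. lra.
  - destruct IHN as (G & kap & Hk & HQ & HG).
    destruct (Nat.eq_dec (S N) n) as [E|E].
    + exists G, kap. split; auto. split.
      * intros s. simpl Qp. rewrite HQ.
        replace (Nat.leb n N) with false by (symmetry; apply Nat.leb_gt; lia).
        replace (Nat.leb n (S N)) with true by (symmetry; apply Nat.leb_le; lia).
        subst n. rewrite S_INR. replace (INR N + 1 + 1) with (INR N + 2) by ring. ring.
      * auto.
    + set (f := fun s => 1 - s / (INR (S N) * (INR (S N) + 1))).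
      exists (fun s => G s * f s), (kap * (1 / (INR (S N) * (INR (S N) + 1)))).
      assert (Hp : 0 < INR (S N) * (INR (S N) + 1)) by (rewrite S_INR; pose proof (pos_INR N); nra).
      split; [apply Rmult_lt_0_compat; [lra| unfold Rdiv; rewrite Rmult_1_l; apply Rinv_0_lt_compat; lra]|].
      split.
      * intros s. simpl Qp. rewrite HQ. unfold f.
        replace (Nat.leb n (S N)) with (Nat.leb n N).
        2:{ destruct (Nat.leb_spec n N); destruct (Nat.leb_spec n (S N)); auto; lia. }
        rewrite S_INR. replace (INR N + 1 + 1) with (INR N + 2) by ring. ring.
      * intros s Hs. destruct (HG s Hs) as [G1 G2].
        destruct (factor_prop n (S N) Hn ltac:(lia) E s Hs) as [F1 F2].
        fold f in F1. split.
        -- rewrite Rabs_mult. apply Rmult_le_compat; try lra.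
           unfold Rdiv; rewrite Rmult_1_l; left; apply Rinv_0_lt_compat; lra. unfold f; lra.
        -- unfold f in *. apply Rlt_gt.
           replace (G s * (1 - s / (INR (S N) * (INR (S N) + 1))) *
             (G (INR n * (INR n + 1)) * (1 - INR n * (INR n + 1) / (INR (S N) * (INR (S N) + 1)))))
           with ((G s * G (INR n * (INR n + 1))) * ((1 - s / (INR (S N) * (INR (S N) + 1))) *
             (1 - INR n * (INR n + 1) / (INR (S N) * (INR (S N) + 1))))) by ring.
           apply Rmult_lt_0_compat; lra.
Qed.

Lemma V0_sign m n : (2 <= m)%nat -> (1 <= n)%nat -> (n + 1 <= m)%nat ->
  exists kap, 0 < kap /\ forall d, 0 < d <= 1 ->
    let c := INR n * (INR n + 1) in
    U (c0 m) (c - d) m * U (c0 m) (c + d) m < 0 /\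
    kap * d <= Rabs (U (c0 m) (c - d) m) /\ kap * d <= Rabs (U (c0 m) (c + d) m).
Proof.
  intros Hm Hn Hnm.
  destruct (Qp_factor n Hn (m - 1)) as (G & kap & Hk & HQ & HG).
  replace (Nat.leb n (m - 1)) with true in HQ by (symmetry; apply Nat.leb_le; lia).
  assert (Hc : 0 < INR n * (INR n + 1)) by (apply le_INR in Hn; simpl in Hn; nra).
  assert (HM : 2 <= INR m) by (apply le_INR in Hm; simpl in Hm; lra).
  exists (INR m * kap / (INR n * (INR n + 1))). split.
  { unfold Rdiv. apply Rmult_lt_0_compat; [nra|apply Rinv_0_lt_compat; lra]. }
  intros d Hd c. rewrite !V0_closed by auto. rewrite !HQ. unfold c.
  set (cc := INR n * (INR n + 1)) in *.
  replace (1 - (cc - d) / cc) with (d / cc) by (field; lra).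
  replace (1 - (cc + d) / cc) with (- (d / cc)) by (field; lra).
  assert (H1 : Rabs (cc - d - cc) <= 1) by (replace (cc - d - cc) with (- d) by ring; rewrite Rabs_Ropp, Rabs_right; lra).
  assert (H2 : Rabs (cc + d - cc) <= 1) by (replace (cc + d - cc) with d by ring; rewrite Rabs_right; lra).
  destruct (HG _ H1) as [A1 A2]. destruct (HG _ H2) as [B1 B2].
  assert (Hdc : 0 < d / cc) by (unfold Rdiv; apply Rmult_lt_0_compat; [lra|apply Rinv_0_lt_compat; lra]).
  assert (GG : G (cc - d) * G (cc + d) > 0).
  { assert (0 < (G (cc - d) * G cc) * (G (cc + d) * G cc)) by (apply Rmult_lt_0_compat; lra).
    assert (0 < G cc * G cc).
    { destruct (Rtotal_order (G cc) 0) as [h|[h|h]]; [nra| rewrite h in A2; lra| nra]. }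
    nra. }
  split; [|split].
  - replace (INR m * (d / cc * G (cc - d)) * (INR m * (- (d / cc) * G (cc + d)))) with
      (- ((INR m * INR m) * ((d / cc) * (d / cc)) * (G (cc - d) * G (cc + d)))) by ring.
    assert (0 < (INR m * INR m) * ((d / cc) * (d / cc)) * (G (cc - d) * G (cc + d))).
    { apply Rmult_lt_0_compat; [apply Rmult_lt_0_compat; apply Rmult_lt_0_compat; lra| lra]. }
    lra.
  - rewrite !Rabs_mult, (Rabs_right (INR m)), (Rabs_right (d / cc)) by lra.
    replace (INR m * kap / cc * d) with (INR m * (d / cc * kap)) by (field; lra).
    apply Rmult_le_compat_l; [lra|]. apply Rmult_le_compat_l; lra.
  - rewrite !Rabs_mult, Rabs_Ropp, (Rabs_right (INR m)), (Rabs_right (d / cc)) by lra.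
    replace (INR m * kap / cc * d) with (INR m * (d / cc * kap)) by (field; lra).
    apply Rmult_le_compat_l; [lra|]. apply Rmult_le_compat_l; lra.
Qed.

Lemma Rabs3 a b c : Rabs (a - b - c) <= Rabs a + Rabs b + Rabs c.
Proof.
  unfold Rminus. eapply Rle_trans; [apply Rabs_triang|].
  eapply Rle_trans; [apply Rplus_le_compat_r, Rabs_triang|]. rewrite !Rabs_Ropp. lra.
Qed.

Lemma Rabs_mul_le a b A Bb : Rabs a <= A -> Rabs b <= Bb -> Rabs (a * b) <= A * Bb.
Proof. intros. rewrite Rabs_mult. apply Rmult_le_compat; auto using Rabs_pos. Qed.

Lemma step_bound u0 u1 v0 v1 c cc s B K S eta :
 0 <= B -> 0 <= K -> 0 <= S -> 0 <= eta <= 1/2 -> 1 <= cc -> Rabs (c - cc) <= eta ->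
 Rabs u0 <= B -> Rabs u1 <= B -> Rabs v1 <= B -> Rabs (u0 - v0) <= K*eta ->
 Rabs (u1 - v1) <= K*eta -> Rabs s <= S ->
 Rabs (2*u1 - u0 - s*u1/c) <= 3*B + 2*S*B /\
 Rabs ((2*u1 - u0 - s*u1/c) - (2*v1 - v0 - s*v1/cc)) <= (3*K + S*(2*K + 2*B))*eta.
Proof.
  intros HB HK HS He Hcc Hc Hu0 Hu1 Hv1 D0 D1 Hs.
  apply Rabs_le_inv in Hc.
  assert (Hc2 : 1/2 <= c) by lra.
  assert (Hi : Rabs (/ c) <= 2).
  { rewrite Rabs_right by (left; apply Rinv_0_lt_compat; lra).
    replace 2 with (/ (1/2)) by field. apply Rinv_le_contravar; lra. }
  assert (Hii : Rabs (/ cc) <= 1).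
  { rewrite Rabs_right by (left; apply Rinv_0_lt_compat; lra).
    rewrite <- Rinv_1. apply Rinv_le_contravar; lra. }
  assert (Hd : Rabs (/ c - / cc) <= 2 * eta).
  { replace (/ c - / cc) with ((cc - c) * (/ c) * (/ cc)) by (field; lra).
    replace (2 * eta) with (eta * 2 * 1) by ring.
    apply Rabs_mul_le; [apply Rabs_mul_le|]; auto.
    rewrite Rabs_minus_sym. apply Rabs_le; lra. }
  split.
  - eapply Rle_trans; [apply Rabs3|].
    assert (Rabs (2 * u1) <= 2 * B) by (apply Rabs_mul_le; auto; rewrite Rabs_right; lra).
    assert (Rabs (s * u1 / c) <= S * B * 2) by (unfold Rdiv; apply Rabs_mul_le; [apply Rabs_mul_le|]; auto).
    lra.
  - replace ((2*u1 - u0 - s*u1/c) - (2*v1 - v0 - s*v1/cc)) with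
      (2 * (u1 - v1) - (u0 - v0) - s * ((u1 - v1) * / c + v1 * (/ c - / cc))) by (field; lra).
    eapply Rle_trans; [apply Rabs3|].
    assert (Rabs (2 * (u1 - v1)) <= 2 * (K * eta)) by (apply Rabs_mul_le; auto; rewrite Rabs_right; lra).
    assert (Rabs (s * ((u1 - v1) * / c + v1 * (/ c - / cc))) <= S * (K * eta * 2 + B * (2 * eta))).
    { apply Rabs_mul_le; auto. eapply Rle_trans; [apply Rabs_triang|].
      apply Rplus_le_compat; apply Rabs_mul_le; auto. }
    nra.
Qed.

Lemma c0_ge1 m j : (1 <= j)%nat -> (j + 1 <= m)%nat -> 1 <= c0 m j.
Proof.
  intros H1 H2. unfold c0. apply le_INR in H1. apply INR_le_lt in H2. simpl in H1. nra.
Qed.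

Lemma U_lip_gen m SB : 0 <= SB -> forall j, (j + 1 <= m)%nat -> exists B K, 0 <= B /\ 0 <= K /\
  forall c eta s, 0 <= eta <= 1/2 ->
   (forall i, (1 <= i)%nat -> (i + 1 <= m)%nat -> Rabs (c i - c0 m i) <= eta) -> Rabs s <= SB ->
   Rabs (U c s j) <= B /\ Rabs (U c s (S j)) <= B /\
   Rabs (U c s j - U (c0 m) s j) <= K * eta /\ Rabs (U c s (S j) - U (c0 m) s (S j)) <= K * eta.
Proof.
  intros HS. induction j; intros Hj.
  - exists 1, 0. split; [lra|split; [lra|]]. intros c eta s He Hc Hs.
    rewrite !U_0, !U_1. rewrite Rminus_0_r, Rminus_diag, Rabs_R0, Rabs_R1. lra.
  - destruct (IHj ltac:(lia)) as (B & K & HB & HK & H).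
    exists (3*B + 2*SB*B), (3*K + SB*(2*K + 2*B) + K). split; [nra|split; [nra|]].
    intros c eta s He Hc Hs.
    assert (H0 := H (c0 m) 0 s ltac:(lra)).
    assert (Hc0 : forall i, (1 <= i)%nat -> (i + 1 <= m)%nat -> Rabs (c0 m i - c0 m i) <= 0)
      by (intros; rewrite Rminus_diag, Rabs_R0; lra).
    destruct (H0 Hc0 Hs) as (_ & V1 & _ & _).
    destruct (H c eta s He Hc Hs) as (U0 & U1 & D0 & D1).
    rewrite !U_SS.
    destruct (step_bound (U c s j) (U c s (S j)) (U (c0 m) s j) (U (c0 m) s (S j)) (c (S j)) (c0 m (S j))
       s B K SB eta HB HK HS He (c0_ge1 m (S j) ltac:(lia) ltac:(lia)) (Hc (S j) ltac:(lia) ltac:(lia))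
       U0 U1 V1 D0 D1 Hs) as [E1 E2].
    assert (0 <= SB * B) by nra. assert (0 <= SB * K * eta) by (apply Rmult_le_pos; nra).
    assert (0 <= SB * B * eta) by (apply Rmult_le_pos; nra). assert (0 <= K * eta) by nra.
    repeat split.
    + lra.
    + lra.
    + nra.
    + nra.
Qed.

Lemma U_lip m SB : 0 <= SB -> (1 <= m)%nat -> exists K, 0 <= K /\
  forall c eta s, 0 <= eta <= 1/2 ->
   (forall i, (1 <= i)%nat -> (i + 1 <= m)%nat -> Rabs (c i - c0 m i) <= eta) -> Rabs s <= SB ->
   Rabs (U c s m - U (c0 m) s m) <= K * eta.
Proof.
  intros HS Hm. destruct m; [lia|].
  destruct (U_lip_gen (S m) SB HS m ltac:(lia)) as (B & K & HB & HK & H).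
  exists K. split; auto. intros. apply H; auto.
Qed.

Inductive PD : nat -> (R -> R) -> R -> Prop :=
| PD0 f a : (forall x, f x = a) -> PD 0 f a
| PDS d f g a b : PD d g a -> (forall x, f x = b + x * g x) -> PD (S d) f a.

Lemma PD_ext d f g a : PD d f a -> (forall x, g x = f x) -> PD d g a.
Proof.
  intros H E. destruct H.
  - apply PD0. intros; rewrite E; auto.
  - eapply PDS; eauto. intros; rewrite E; auto.
Qed.

Lemma PD_lift d : forall f a, PD d f a -> PD (S d) f 0.
Proof.
  induction d; intros f a H.
  - inversion H as [? ? E1|]; subst.
    apply (PDS 0 f (fun _ => 0) 0 a); [apply PD0; auto|]. intros; rewrite E1; ring.
  - inversion H as [|? ? g ? b G E]; subst.
    apply (PDS (S d) f g 0 b); auto. eapply IHd; eauto.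
Qed.

Lemma PD_add d : forall f g a b, PD d f a -> PD d g b -> PD d (fun x => f x + g x) (a + b).
Proof.
  induction d; intros f g a b Hf Hg.
  - inversion Hf as [? ? E1|]; inversion Hg as [? ? E2|]; subst.
    apply PD0. intros; rewrite E1, E2; auto.
  - inversion Hf as [|? ? g1 ? b1 G1 E1]; inversion Hg as [|? ? g2 ? b2 G2 E2]; subst.
    apply (PDS d _ (fun x => g1 x + g2 x) _ (b1 + b2)).
    + apply IHd; auto.
    + intros. rewrite E1, E2. ring.
Qed.

Lemma PD_scal d : forall f a k, PD d f a -> PD d (fun x => k * f x) (k * a).
Proof.
  induction d; intros f a k Hf.
  - inversion Hf as [? ? E|]; subst. apply PD0. intros; rewrite E; auto.
  - inversion Hf as [|? ? g ? b G E]; subst.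
    apply (PDS d _ (fun x => k * g x) _ (k * b)); [apply IHd; auto|]. intros; rewrite E; ring.
Qed.

Lemma PD_mulX d f a : PD d f a -> PD (S d) (fun x => x * f x) a.
Proof. intros H. apply (PDS d _ f a 0); auto. intros; ring. Qed.

Lemma PD_factor d : forall f a, PD (S d) f a -> forall r, exists g, PD d g a /\ forall x, f x - f r = (x - r) * g x.
Proof.
  induction d; intros f a H r; inversion H as [|? ? g ? b G E0]; subst.
  - inversion G as [? ? E1|]; subst. exists (fun _ => a). split; [apply PD0; auto|].
    intros. rewrite !E0, !E1. ring.
  - destruct (IHd g a G r) as (h & Hh & E).
    exists (fun x => g r + x * h x). split.
    + apply (PDS d _ h a (g r)); auto.
    + intros x. rewrite !E0. replace (b + x * g x - (b + r * g r)) with (x * (g x - g r) + (x - r) * g r) by ring.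
      rewrite E. ring.
Qed.

Lemma PD_roots d : forall f a, PD d f a -> a <> 0 -> forall l, NoDup l -> (forall r, In r l -> f r = 0) -> (length l <= d)%nat.
Proof.
  induction d; intros f a H Ha l Hl Hr.
  - inversion H as [? ? E0|]; subst. destruct l as [|r l]; simpl; auto.
    exfalso. apply Ha. rewrite <- (E0 r). apply Hr. left; auto.
  - destruct l as [|r l]; simpl; [lia|].
    destruct (PD_factor d f a H r) as (g & Hg & E).
    inversion Hl as [|? ? Hn Hnd]; subst.
    assert (length l <= d)%nat; [|lia].
    apply (IHd g a Hg Ha l Hnd). intros r' Hr'.
    assert (r' <> r) by (intro; subst; auto).
    pose proof (E r') as E'. rewrite (Hr r'), (Hr r) in E' by (simpl; auto).
    assert (Z : (r' - r) * g r' = 0) by lra.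
    apply Rmult_integral in Z. destruct Z; auto. lra.
Qed.

Lemma PD_cont d : forall f a, PD d f a -> continuity f.
Proof.
  induction d; intros f a H.
  - inversion H as [? ? E0|]; subst.
    intros x. apply (continuity_pt_locally_ext (fct_cte a) f 1 x); [lra|intros; rewrite E0; auto|].
    apply continuity_pt_const. intros ? ?; auto.
  - inversion H as [|? ? g ? b G E0]; subst.
    intros x. apply (continuity_pt_locally_ext (plus_fct (fct_cte b) (mult_fct id g)) f 1 x);
      [lra|intros; rewrite E0; auto|].
    apply continuity_pt_plus. apply continuity_pt_const. intros ? ?; auto.
    apply continuity_pt_mult. apply derivable_continuous_pt. apply derivable_pt_id.
    apply (IHd g a G).
Qed.

Lemma U_PD m c : (forall i, (1 <= i)%nat -> (i + 1 <= m)%nat -> c i <> 0) ->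
  forall j, (j + 1 <= m)%nat -> exists a, a <> 0 /\ PD j (fun s => U c s (S j)) a /\ PD j (fun s => U c s j) 0.
Proof.
  intros Hc. induction j; intros Hj.
  - exists 1. split; [lra|]. split; apply PD0; reflexivity.
  - destruct (IHj ltac:(lia)) as (a & Ha & P1 & P0).
    exists (- / c (S j) * a). split.
    + apply Rmult_integral_contrapositive. split; auto. apply Ropp_neq_0_compat, Rinv_neq_0_compat. apply Hc; lia.
    + split; [|eapply PD_lift; eauto].
      assert (A : PD j (fun s => 2 * U c s (S j) + (-1) * U c s j) (2 * a + (-1) * 0)).
      { apply PD_add; apply PD_scal; auto. }
      apply PD_lift in A.
      assert (B' : PD (S j) (fun s => s * (- / c (S j) * U c s (S j))) (- / c (S j) * a)).
      { apply PD_mulX, PD_scal; auto. }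
      pose proof (PD_add _ _ _ _ _ A B') as C. rewrite Rplus_0_l in C.
      eapply PD_ext; [apply C|]. intros s. rewrite U_SS. field. apply Hc; lia.
Qed.

Lemma ext_in m v j : in_range m j -> ext m v j = v j.
Proof.
  intros [H1 H2]. unfold ext. apply Nat.leb_le in H1. apply Nat.leb_le in H2. rewrite H1, H2. reflexivity.
Qed.
Lemma ext_0 m v : ext m v 0 = 0. Proof. reflexivity. Qed.
Lemma ext_m m v : (1 <= m)%nat -> ext m v m = 0.
Proof.
  intros H. unfold ext. replace (Nat.leb m (m - 1)) with false.
  - destruct (Nat.leb 1 m); reflexivity.
  - symmetry. apply Nat.leb_gt. lia.
Qed.

Lemma ext_all m v j : (j <= m)%nat -> v 0%nat = 0 -> v m = 0 -> ext m v j = v j.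
Proof.
  intros Hj H0 Hm. destruct j. { rewrite ext_0; auto. }
  destruct (Nat.eq_dec (S j) m) as [E|E].
  - rewrite <- E in *. rewrite ext_m by lia. auto.
  - apply ext_in. split; lia.
Qed.

Fixpoint sh (y : nat -> R) (n : nat) : R * R :=
  match n with
  | O => (0, 0)
  | S n' => let p := sh y n' in (snd p, 2 * snd p - fst p - y (S n'))
  end.
Definition Z y n := fst (sh y n).
Lemma Z_SS y n : Z y (S (S n)) = 2 * Z y (S n) - Z y n - y (S n).
Proof. reflexivity. Qed.

Definition sol m y j := Z y j - INR j * Z y m / INR m.

Lemma sol_spec m y : (2 <= m)%nat -> forall j, in_range m j -> Amul m (sol m y) j = y j.
Proof.
  intros Hm j Hj. destruct Hj as [H1 H2].
  assert (HM : 0 < INR m) by (apply lt_0_INR; lia).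
  assert (S0 : sol m y 0 = 0) by (unfold sol, Z; simpl; unfold Rdiv; ring).
  assert (Sm : sol m y m = 0) by (unfold sol; field; lra).
  unfold Amul. destruct j as [|j]; [lia|].
  rewrite !ext_all by (auto; lia).
  replace (S j - 1)%nat with j by lia. replace (S j + 1)%nat with (S (S j)) by lia.
  unfold sol. rewrite Z_SS, !S_INR. field. lra.
Qed.

Lemma Amul_lin m a f g j : Amul m (fun i => a * f i + g i) j = a * Amul m f j + Amul m g j.
Proof.
  unfold Amul, ext.
  destruct (Nat.leb 1 j && Nat.leb j (m - 1))%bool;
  destruct (Nat.leb 1 (j - 1) && Nat.leb (j - 1) (m - 1))%bool;
  destruct (Nat.leb 1 (j + 1) && Nat.leb (j + 1) (m - 1))%bool; ring.
Qed.

Lemma Amul_unique m w w' : (2 <= m)%nat -> (forall j, in_range m j -> Amul m w j = Amul m w' j) ->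
  forall j, in_range m j -> w j = w' j.
Proof.
  intros Hm H.
  set (e := fun i => ext m w i - ext m w' i).
  assert (He : forall i, (i + 1 <= m)%nat -> e i = INR i * e 1%nat /\ e (S i) = INR (S i) * e 1%nat).
  { induction i; intros Hi.
    - unfold e. rewrite !ext_0. simpl. split; ring.
    - destruct IHi as [I0 I1]; [lia|]. split; auto.
      assert (R1 : in_range m (S i)) by (split; lia).
      pose proof (H _ R1) as E. unfold Amul in E.
      replace (S i - 1)%nat with i in E by lia. replace (S i + 1)%nat with (S (S i)) in E by lia.
      assert (e (S (S i)) = 2 * e (S i) - e i) by (unfold e; lra).
      rewrite H0, I0, I1, !S_INR. ring. }
  assert (E1 : e 1%nat = 0).
  { destruct m as [|m']; [lia|]. destruct (He m' ltac:(lia)) as [_ Em].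
    unfold e at 1 in Em. rewrite !ext_m in Em by lia.
    assert (0 < INR (S m')) by (apply lt_0_INR; lia). nra. }
  intros j Hj. destruct (He j ltac:(destruct Hj; lia)) as [Ej _].
  rewrite E1, Rmult_0_r in Ej. unfold e in Ej. rewrite !ext_in in Ej by auto. lra.
Qed.

Lemma Ainv_spec m y : (2 <= m)%nat -> forall j, in_range m j -> Amul m (Ainv m y) j = y j.
Proof.
  intros Hm. unfold Ainv. apply epsilon_spec. exists (sol m y). apply sol_spec; auto.
Qed.

Lemma Ainv_eq m y w : (2 <= m)%nat -> (forall j, in_range m j -> Amul m w j = y j) ->
  forall j, in_range m j -> Ainv m y j = w j.
Proof.
  intros Hm H. apply Amul_unique; auto. intros j Hj. rewrite Ainv_spec, H; auto.
Qed.

Lemma Z_bound m y My : 0 <= My -> (forall i, in_range m i -> Rabs (y i) <= My) ->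
  forall n, (n + 1 <= m)%nat -> Rabs (Z y (S n) - Z y n) <= INR n * My /\
     Rabs (Z y (S n)) <= INR (S n) * INR (S n) * My.
Proof.
  intros HM Hy. induction n; intros Hn.
  - unfold Z; simpl. rewrite Rminus_0_r, Rabs_R0. lra.
  - destruct IHn as [I1 I2]; [lia|].
    assert (D : Rabs (Z y (S (S n)) - Z y (S n)) <= INR (S n) * My).
    { rewrite Z_SS. replace (2 * Z y (S n) - Z y n - y (S n) - Z y (S n)) with ((Z y (S n) - Z y n) - y (S n)) by ring.
      eapply Rle_trans; [apply Rabs_triang|]. rewrite Rabs_Ropp.
      pose proof (Hy (S n) ltac:(split; lia)). rewrite S_INR. lra. }
    split; auto.
    replace (Z y (S (S n))) with ((Z y (S (S n)) - Z y (S n)) + Z y (S n)) by ring.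
    eapply Rle_trans; [apply Rabs_triang|].
    pose proof (pos_INR n). rewrite !S_INR in *. nra.
Qed.

Lemma Ainv_bound m y My : (2 <= m)%nat -> 0 <= My -> (forall i, in_range m i -> Rabs (y i) <= My) ->
  forall j, in_range m j -> Rabs (Ainv m y j) <= 2 * INR m * INR m * My.
Proof.
  intros Hm HM Hy j Hj. rewrite (Ainv_eq m y (sol m y)) by (auto; apply sol_spec; auto).
  assert (Zb : forall n, (n <= m)%nat -> Rabs (Z y n) <= INR m * INR m * My).
  { intros n Hn. destruct n. { unfold Z; simpl. rewrite Rabs_R0. nra. }
    destruct (Z_bound m y My HM Hy n ltac:(lia)) as [_ B].
    apply le_INR in Hn. pose proof (pos_INR (S n)). eapply Rle_trans; [apply B|].
    apply Rmult_le_compat_r; auto. apply Rmult_le_compat; lra. }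
  destruct Hj as [H1 H2].
  assert (HMp : 0 < INR m) by (apply lt_0_INR; lia).
  assert (Hjm : INR j <= INR m) by (apply le_INR; lia).
  pose proof (pos_INR j).
  unfold sol. unfold Rminus. eapply Rle_trans; [apply Rabs_triang|]. rewrite Rabs_Ropp.
  pose proof (Zb j ltac:(lia)). pose proof (Zb m ltac:(lia)).
  assert (Rabs (INR j * Z y m / INR m) <= INR m * INR m * My).
  { unfold Rdiv. rewrite !Rabs_mult, (Rabs_right (INR j)) by lra. rewrite (Rabs_right (/ INR m)) by (left; apply Rinv_0_lt_compat; lra).
    replace (INR j * Rabs (Z y m) * / INR m) with ((INR j / INR m) * Rabs (Z y m)) by (field; lra).
    assert (INR j / INR m <= 1) by (unfold Rdiv; apply (Rmult_le_reg_r (INR m)); auto; field_simplify; lra).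
    assert (0 <= INR j / INR m) by (unfold Rdiv; apply Rmult_le_pos; auto; left; apply Rinv_0_lt_compat; lra).
    pose proof (Rabs_pos (Z y m)). nra. }
  lra.
Qed.

Definition dd m j := INR j * (INR m - INR j) / 2.

Lemma Amul_dd m : (2 <= m)%nat -> forall j, in_range m j -> Amul m (dd m) j = 1.
Proof.
  intros Hm j [H1 H2].
  unfold Amul. destruct j as [|j]; [lia|].
  rewrite !ext_all by (unfold dd; simpl; try lia; try lra; ring).
  replace (S j - 1)%nat with j by lia. replace (S j + 1)%nat with (S (S j)) by lia.
  unfold dd. rewrite !S_INR. field.
Qed.

Lemma Ainv_one m : (2 <= m)%nat -> forall j, in_range m j -> Ainv m (fun _ => 1) j = dd m j.
Proof. intros Hm. apply Ainv_eq; auto. apply Amul_dd; auto. Qed.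

Lemma Ainv_decomp m x L : (2 <= m)%nat -> forall j, in_range m j ->
  Ainv m x j = L * dd m j + Ainv m (fun i => x i - L) j.
Proof.
  intros Hm. apply Ainv_eq; auto. intros j Hj.
  rewrite Amul_lin, Ainv_spec, Amul_dd by auto. ring.
Qed.

Lemma eig_iff m w L lam : (2 <= m)%nat -> 0 < L -> (forall j, in_range m j -> 0 < w j) ->
  is_eigenvalue m w lam <-> U (fun i => 2 * w i / L) ((lam - 2) / L) m = 0.
Proof.
  intros Hm HL Hw. set (c := fun i => 2 * w i / L). set (s := (lam - 2) / L).
  split.
  - intros (xi & (j0 & Hj0 & Hxi) & Heq).
    set (v := ext m (fun i => w i * xi i)).
    assert (Hv : forall i, (i + 1 <= m)%nat -> v i = v 1%nat * U c s i /\ v (S i) = v 1%nat * U c s (S i)).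
    { induction i; intros Hi.
      - rewrite U_0, U_1. unfold v. rewrite ext_0. split; ring.
      - destruct IHi as [I0 I1]; [lia|]. split; auto.
        assert (R1 : in_range m (S i)) by (split; lia).
        pose proof (Heq _ R1) as E. cbv zeta in E. fold v in E.
        replace (S i - 1)%nat with i in E by lia. replace (S i + 1)%nat with (S (S i)) in E by lia.
        assert (Ex : xi (S i) = v (S i) / w (S i)).
        { unfold v. rewrite ext_in by auto. field. specialize (Hw _ R1). lra. }
        rewrite Ex in E. rewrite U_SS. change (c (S i)) with (2 * w (S i) / L).

        specialize (Hw _ R1).
        assert (v (S (S i)) = 2 * v (S i) - v i + (2 - lam) * v (S i) / (2 * w (S i))).
        { field_simplify_eq; [|lra]. field_simplify_eq in E; [|lra]. lra. }
        rewrite H, I0, I1.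
        replace lam with (s * L + 2) by (unfold s; field; lra). field. lra. }
    destruct m as [|m']; [lia|].
    destruct (Hv m' ltac:(lia)) as [_ Hm'].
    unfold v at 1 in Hm'. rewrite ext_m in Hm' by lia.
    destruct (Req_dec (U c s (S m')) 0) as [E|E]; auto. exfalso.
    assert (V1 : v 1%nat = 0) by (apply (Rmult_eq_reg_r (U c s (S m'))); auto; lra).
    destruct Hj0 as [A1 A2].
    destruct (Hv j0 ltac:(lia)) as [Hj _]. rewrite V1, Rmult_0_l in Hj.
    unfold v in Hj. rewrite ext_in in Hj by (split; lia).
    apply Hxi. specialize (Hw j0 ltac:(split; lia)).
    apply Rmult_integral in Hj. destruct Hj; auto. lra.
  - intros Hm0.
    exists (fun i => U c s i / w i). split.
    + exists 1%nat. split; [split; lia|]. rewrite U_1.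
      specialize (Hw 1%nat ltac:(split; lia)). apply Rmult_integral_contrapositive; split; [lra|].
      apply Rinv_neq_0_compat; lra.
    + intros j Hj. cbv zeta.
      assert (E : forall i, (i <= m)%nat -> ext m (fun i => w i * (U c s i / w i)) i = U c s i).
      { intros i Hi. destruct i. { rewrite ext_0, U_0; auto. }
        destruct (Nat.eq_dec (S i) m) as [E|E].
        - rewrite <- E at 1. rewrite ext_m by lia. rewrite E. auto.
        - rewrite ext_in by (split; lia). field. apply Rgt_not_eq, Hw. split; lia. }
      destruct Hj as [H1 H2]. destruct j as [|j]; [lia|].
      rewrite !E by lia.
      replace (S j - 1)%nat with j by lia. replace (S j + 1)%nat with (S (S j)) by lia.
      rewrite U_SS. change (c (S j)) with (2 * w (S j) / L).
      replace lam with (s * L + 2) by (unfold s; field; lra). specialize (Hw (S j) ltac:(split; lia)). field. lra.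
Qed.

Lemma unif_d m (Q : nat -> R -> Prop) :
  (forall j, in_range m j -> exists d, d > 0 /\ forall eps, 0 < eps < d -> Q j eps) ->
  exists d, d > 0 /\ forall eps, 0 < eps < d -> forall j, in_range m j -> Q j eps.
Proof.
  intros H.
  assert (G : forall N, exists d, d > 0 /\ forall eps, 0 < eps < d -> forall j, (1 <= j <= N)%nat -> in_range m j -> Q j eps).
  { induction N.
    - exists 1. split; [lra|]. intros; lia.
    - destruct IHN as (d & Hd & HQ).
      destruct (le_lt_dec (S N) (m - 1)) as [Hle|Hgt].
      + destruct (H (S N) ltac:(split; lia)) as (d' & Hd' & HQ').
        exists (Rmin d d'). split; [apply Rmin_pos; lra|].
        intros eps Heps j Hj Hr. pose proof (Rmin_l d d'). pose proof (Rmin_r d d').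
        destruct (Nat.eq_dec j (S N)) as [->|E].
        * apply HQ'. lra.
        * apply HQ; auto; [lra|lia].
      + exists d. split; auto. intros eps Heps j Hj Hr. destruct Hr. apply HQ; [exact Heps| lia | split; lia]. }
  destruct (G (m - 1)%nat) as (d & Hd & HQ). exists d. split; auto.
Qed.

Lemma unif_k m (P : nat -> R -> Prop) :
  (forall n k k', 0 < k' <= k -> P n k -> P n k') ->
  (forall n, in_range m n -> exists k, 0 < k /\ P n k) ->
  exists k, 0 < k /\ forall n, in_range m n -> P n k.
Proof.
  intros Hmon H.
  assert (G : forall N, exists k, 0 < k /\ forall n, (n <= N)%nat -> in_range m n -> P n k).
  { induction N.
    - exists 1. split; [lra|]. intros n Hn [Hr _]. lia.
    - destruct IHN as (k & Hk & HP).
      destruct (le_lt_dec (S N) (m - 1)) as [Hle|Hgt].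
      + destruct (H (S N) ltac:(split; lia)) as (k' & Hk' & HP').
        exists (Rmin k k'). split; [apply Rmin_pos; lra|].
        intros n Hn Hr. pose proof (Rmin_l k k'). pose proof (Rmin_r k k').
        assert (0 < Rmin k k') by (apply Rmin_pos; lra).
        destruct (Nat.eq_dec n (S N)) as [->|E].
        * apply (Hmon _ k'); auto; lra.
        * apply (Hmon _ k); [lra|]. apply HP; auto; lia.
      + exists k. split; auto. intros n Hn Hr. destruct Hr. apply HP; [lia|split; lia]. }
  destruct (G (m - 1)%nat) as (k & Hk & HP). exists k. split; auto.
  intros n Hn. apply HP; auto. destruct Hn; lia.
Qed.

Lemma bound_fin (f : nat -> R) N : exists M, 0 <= M /\ forall j, (j <= N)%nat -> Rabs (f j) <= M.
Proof.
  induction N.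
  - exists (Rabs (f 0%nat)). split; [apply Rabs_pos|]. intros j Hj. replace j with 0%nat by lia. lra.
  - destruct IHN as (M & HM & H). exists (Rmax M (Rabs (f (S N)))). split.
    + eapply Rle_trans; [apply HM|apply Rmax_l].
    + intros j Hj. destruct (Nat.eq_dec j (S N)) as [->|E]; [apply Rmax_r|].
      eapply Rle_trans; [apply H; lia|apply Rmax_l].
Qed.

Lemma NoDup_map_inj {A B : Type} (f : A -> B) l : NoDup l ->
  (forall a b, In a l -> In b l -> f a = f b -> a = b) -> NoDup (map f l).
Proof.
  induction l as [|a l IH]; intros Hl Hf; simpl; constructor.
  - inversion Hl as [|? ? Ha Hl']; subst. intros Hin. apply in_map_iff in Hin.
    destruct Hin as (b & Hb & Hbl). assert (b = a) by (apply Hf; simpl; auto). subst. auto.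
  - inversion Hl; subst. apply IH; auto. intros; apply Hf; simpl; auto.
Qed.

Lemma same_sign a b : Rabs (a - b) < Rabs b -> a * b > 0.
Proof.
  unfold Rabs; destruct (Rcase_abs (a - b)); destruct (Rcase_abs b); intros; nra.
Qed.

Lemma dd_ge m j : in_range m j -> 1/2 <= dd m j.
Proof.
  intros [H1 H2]. unfold dd.
  assert (INR j + 1 <= INR m) by (apply INR_le_lt; lia). apply le_INR in H1. simpl in H1. assert (0 <= (INR j - 1) * (INR m - INR j - 1)) by (apply Rmult_le_pos; lra). nra.
Qed.

Lemma L0_big eps T : 0 < eps -> eps < exp (-1) -> eps < exp (- T) ->
  T < - 2 * ln eps - ln (Rabs (ln eps)) + 2 * ln 2.
Proof.
  intros H0 H1 H2.
  assert (A1 : ln eps < -1) by (rewrite <- (ln_exp (-1)); apply ln_increasing; auto).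
  assert (A2 : ln eps < - T) by (rewrite <- (ln_exp (-T)); apply ln_increasing; auto).
  set (t := - ln eps). assert (Ht : Rabs (ln eps) = t) by (unfold t; apply Rabs_left; lra).
  rewrite Ht. assert (1 < t) by (unfold t; lra).
  pose proof (exp_ineq1_le (ln t)) as E. rewrite exp_ln in E by lra.
  pose proof ln_lt_2. unfold t in *. lra.
Qed.

Theorem lemma6 (m : nat) (hm : (2 <= m)%nat) (x : R -> nat -> R)
  (hx_eq : exists d, d > 0 /\ forall eps, 0 < eps < d ->
      forall j, in_range m j ->
        exp (- x eps j) = eps ^ 2 / 8 * Ainv m (x eps) j)
  (hx_asym : forall j, in_range m j ->
      forall e, e > 0 -> exists d, d > 0 /\ forall eps, 0 < eps < d ->
        Rabs (x eps j - (- 2 * ln eps - ln (Rabs (ln eps)) + 2 * ln 2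
                         - ln (Ainv m (fun _ => 1) j))) < e) :
  exists C d, d > 0 /\ forall eps, 0 < eps < d ->
    exists om : nat -> R,
      (forall lam, is_eigenvalue m (Ainv m (x eps)) lam <->
                   exists n, in_range m n /\ lam = om n) /\
      (forall n, in_range m n ->
         Rabs (om n - (2 + (- 4 * ln eps - 2 * ln (Rabs (ln eps)) + 4 * ln 2)
                          * (INR (n * (n + 1)) / 2))) <= C).
Proof.
  clear hx_eq.
  assert (HM : 2 <= INR m) by (apply le_INR in hm; simpl in hm; lra).
  destruct (bound_fin (fun j => ln (dd m j)) m) as (Ml & HMl0 & HMl).
  set (My := Ml + 1).
  set (K0 := 2 * INR m * INR m * My + 1).
  assert (HK0 : 1 <= K0) by (unfold K0, My; assert (0 <= INR m * INR m) by nra; nra).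
  set (SB := INR m * INR m + 1).
  destruct (U_lip m SB ltac:(unfold SB; nra) ltac:(lia)) as (K & HK & HLip).
  destruct (unif_k m (fun n kap => forall d, 0 < d <= 1 ->
    let c := INR n * (INR n + 1) in
    U (c0 m) (c - d) m * U (c0 m) (c + d) m < 0 /\
    kap * d <= Rabs (U (c0 m) (c - d) m) /\ kap * d <= Rabs (U (c0 m) (c + d) m))) as (kap & Hkap & Hks).
  { intros n k k' Hk HP d Hd. cbv zeta in *. destruct (HP d Hd) as (A & B1 & B2).
    assert (k' * d <= k * d) by (apply Rmult_le_compat_r; lra). repeat split; auto; lra. }
  { intros n [H1 H2]. apply V0_sign; auto; lia. }
  set (K1 := K + 1).
  set (T := 4 * K0 + 1 + 8 * K1 * K0 / kap).
  assert (HT : 4 * K0 + 1 <= T).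
  { unfold T. assert (0 <= 8 * K1 * K0 / kap); [|lra].
    unfold Rdiv. apply Rmult_le_pos; [unfold K1; nra|left; apply Rinv_0_lt_compat; lra]. }
  destruct (unif_d m (fun j eps => Rabs (x eps j - (- 2 * ln eps - ln (Rabs (ln eps)) + 2 * ln 2
                         - ln (Ainv m (fun _ => 1) j))) < 1)) as (d1 & Hd1 & Hx).
  { intros j Hj. apply hx_asym; auto; lra. }
  exists (4 * K1 * K0 / kap), (Rmin d1 (Rmin (exp (-1)) (exp (- T)))).
  split. { apply Rmin_pos; auto. apply Rmin_pos; apply exp_pos. }
  intros eps Heps.
  pose proof (Rmin_l d1 (Rmin (exp (-1)) (exp (- T)))) as Rm1.
  pose proof (Rmin_r d1 (Rmin (exp (-1)) (exp (- T)))) as Rm2.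
  pose proof (Rmin_l (exp (-1)) (exp (- T))) as Rm3. pose proof (Rmin_r (exp (-1)) (exp (- T))) as Rm4.
  pose proof (L0_big eps T ltac:(lra) ltac:(lra) ltac:(lra)) as HL.
  set (L0 := - 2 * ln eps - ln (Rabs (ln eps)) + 2 * ln 2) in *.
  assert (HL0 : 0 < L0) by lra.
  set (g := Ainv m (fun i => x eps i - L0)).
  assert (Hg : forall j, in_range m j -> Rabs (g j) <= 2 * INR m * INR m * My).
  { apply Ainv_bound; auto. unfold My; lra. intros i Hi.
    pose proof (Hx eps ltac:(lra) i Hi) as Hxi. rewrite Ainv_one in Hxi by auto.
    assert (Hl : Rabs (ln (dd m i)) <= Ml) by (apply HMl; destruct Hi; lia).
    apply Rabs_lt_inv in Hxi. apply Rabs_le_inv in Hl. apply Rabs_le. unfold My, L0. lra. }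
  set (w := Ainv m (x eps)).
  assert (Hw : forall j, in_range m j -> w j = L0 * dd m j + g j).
  { intros j Hj. unfold w, g. apply Ainv_decomp; auto. }
  assert (Hwpos : forall j, in_range m j -> 0 < w j).
  { intros j Hj. rewrite Hw by auto. pose proof (dd_ge m j Hj) as Hd. pose proof (Hg j Hj) as Hgj.
    apply Rabs_le_inv in Hgj. assert (2 * INR m * INR m * My <= K0) by (unfold K0; lra). nra. }
  set (c := fun i => 2 * w i / L0).
  set (eta := 2 * K0 / L0).
  assert (Heta : 0 <= eta <= 1/2).
  { unfold eta. split.
    - unfold Rdiv. apply Rmult_le_pos; [lra|left; apply Rinv_0_lt_compat; lra].
    - apply (Rmult_le_reg_r L0); auto. field_simplify; lra. }
  assert (Hc : forall i, (1 <= i)%nat -> (i + 1 <= m)%nat -> Rabs (c i - c0 m i) <= eta).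
  { intros i H1 H2. assert (Hi : in_range m i) by (split; lia).
    unfold c. rewrite Hw by auto. unfold c0, dd, eta.
    replace (2 * (L0 * (INR i * (INR m - INR i) / 2) + g i) / L0 - INR i * (INR m - INR i))
      with (2 * g i / L0) by (field; lra).
    unfold Rdiv. rewrite !Rabs_mult, Rabs_right by lra. rewrite (Rabs_right (/ L0)) by (left; apply Rinv_0_lt_compat; lra).
    apply Rmult_le_compat_r; [left; apply Rinv_0_lt_compat; lra|].
    pose proof (Hg i Hi). assert (2 * INR m * INR m * My <= K0) by (unfold K0; lra). lra. }
  set (delta := 2 * K1 * eta / kap).
  assert (Hdelta : 0 < delta <= 1/2).
  { unfold delta, eta. split.
    - unfold Rdiv. repeat apply Rmult_lt_0_compat; try lra; try (apply Rinv_0_lt_compat; lra). unfold K1; lra.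
    - replace (2 * K1 * (2 * K0 / L0) / kap) with ((4 * K1 * K0 / kap) / L0) by (field; lra).
      apply (Rmult_le_reg_r L0); auto. unfold Rdiv at 1. rewrite Rmult_assoc, Rinv_l, Rmult_1_r by lra.
      unfold T in HL. lra. }
  assert (Hcnz : forall i, (1 <= i)%nat -> (i + 1 <= m)%nat -> c i <> 0).
  { intros i H1 H2. unfold c. pose proof (Hwpos i ltac:(split; lia)).
    apply Rgt_not_eq. unfold Rdiv. apply Rmult_lt_0_compat; [lra|apply Rinv_0_lt_compat; lra]. }
  destruct (U_PD m c Hcnz (m - 1) ltac:(lia)) as (a & Ha & HPD & _).
  replace (S (m - 1)) with m in HPD by lia.
  assert (Hroot : forall n, in_range m n -> exists s,
     INR n * (INR n + 1) - delta <= s <= INR n * (INR n + 1) + delta /\ U c s m = 0).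
  { intros n Hn. destruct (Hks n Hn delta ltac:(lra)) as (S1 & S2 & S3).
    set (cn := INR n * (INR n + 1)) in *.
    assert (Hcn : 0 <= cn <= INR m * INR m).
    { destruct Hn as [H1 H2]. unfold cn. pose proof (pos_INR n).
      assert (INR n + 1 <= INR m) by (apply INR_le_lt; lia). nra. }
    assert (Hs1 : Rabs (cn - delta) <= SB) by (apply Rabs_le; unfold SB; lra).
    assert (Hs2 : Rabs (cn + delta) <= SB) by (apply Rabs_le; unfold SB; lra).
    pose proof (HLip c eta (cn - delta) Heta Hc Hs1) as D1.
    pose proof (HLip c eta (cn + delta) Heta Hc Hs2) as D2.
    assert (KD : K * eta < kap * delta).
    { unfold delta. replace (kap * (2 * K1 * eta / kap)) with (2 * K1 * eta) by (field; lra).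
      assert (0 < eta) by (unfold eta; unfold Rdiv; apply Rmult_lt_0_compat; [lra|apply Rinv_0_lt_compat; lra]).
      unfold K1. nra. }
    pose proof (same_sign (U c (cn - delta) m) (U (c0 m) (cn - delta) m) ltac:(lra)) as E1.
    pose proof (same_sign (U c (cn + delta) m) (U (c0 m) (cn + delta) m) ltac:(lra)) as E2.
    destruct (IVT_cor (fun s => U c s m) (cn - delta) (cn + delta) (PD_cont _ _ _ HPD) ltac:(lra))
      as (z & Hz & Hz0).
    { assert ((U c (cn - delta) m * U c (cn + delta) m) * (U (c0 m) (cn - delta) m * U (c0 m) (cn + delta) m) > 0).
      { replace ((U c (cn - delta) m * U c (cn + delta) m) * (U (c0 m) (cn - delta) m * U (c0 m) (cn + delta) m))
          with ((U c (cn - delta) m * U (c0 m) (cn - delta) m) * (U c (cn + delta) m * U (c0 m) (cn + delta) m)) by ring.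
        apply Rmult_lt_0_compat; lra. }
      nra. }
    exists z. auto. }
  set (sr := fun n => epsilon (inhabits 0) (fun s => in_range m n ->
     INR n * (INR n + 1) - delta <= s <= INR n * (INR n + 1) + delta /\ U c s m = 0)).
  assert (Hsr : forall n, in_range m n ->
     INR n * (INR n + 1) - delta <= sr n <= INR n * (INR n + 1) + delta /\ U c (sr n) m = 0).
  { intros n Hn. unfold sr. apply (epsilon_spec (inhabits 0) (fun s => in_range m n ->
     INR n * (INR n + 1) - delta <= s <= INR n * (INR n + 1) + delta /\ U c s m = 0)); auto.
    destruct (Hroot n Hn) as (s & Hs). exists s. auto. }
  exists (fun n => 2 + L0 * sr n). split.
  - intros lam. rewrite (eig_iff m w L0 lam hm HL0 Hwpos). fold c. split.
    + intros HV. set (s := (lam - 2) / L0) in *.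
      destruct (classic (exists n, in_range m n /\ s = sr n)) as [(n & Hn & Hs)|Hno].
      * exists n. split; auto. unfold s in Hs. rewrite <- Hs. field. lra.
      * exfalso.
        assert (Hnd : NoDup (s :: map sr (seq 1 (m - 1)))).
        { constructor.
          - intros Hin. apply in_map_iff in Hin. destruct Hin as (n & Hn & Hin).
            apply in_seq in Hin. apply Hno. exists n. split; auto. split; lia.
          - apply NoDup_map_inj; [apply seq_NoDup|].
            intros n1 n2 H1 H2 E. apply in_seq in H1. apply in_seq in H2.
            destruct (Hsr n1 ltac:(split; lia)) as [B1 _]. destruct (Hsr n2 ltac:(split; lia)) as [B2 _].
            destruct (Nat.lt_total n1 n2) as [L|[L|L]]; auto; exfalso.
            + assert (INR n1 + 1 <= INR n2) by (apply INR_le_lt; lia). pose proof (pos_INR n1).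
              assert (INR n1 * (INR n1 + 1) + 4 <= INR n2 * (INR n2 + 1)).
              { assert (1 <= INR n1) by (apply (le_INR 1); lia). nra. }
              lra.
            + assert (INR n2 + 1 <= INR n1) by (apply INR_le_lt; lia). pose proof (pos_INR n2).
              assert (INR n2 * (INR n2 + 1) + 4 <= INR n1 * (INR n1 + 1)).
              { assert (1 <= INR n2) by (apply (le_INR 1); lia). nra. }
              lra. }
        pose proof (PD_roots (m - 1) _ a HPD Ha _ Hnd) as Hlen.
        assert (Hlen' : (length (s :: map sr (seq 1 (m - 1))) <= m - 1)%nat).
        { apply Hlen. intros r Hr. destruct Hr as [<-|Hr]; auto.
          apply in_map_iff in Hr. destruct Hr as (n & <- & Hin). apply in_seq in Hin.
          apply Hsr. split; lia. }
        simpl in Hlen'. rewrite length_map, length_seq in Hlen'. lia.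
    + intros (n & Hn & ->). replace ((2 + L0 * sr n - 2) / L0) with (sr n) by (field; lra).
      apply Hsr; auto.
  - intros n Hn. destruct (Hsr n Hn) as [B _].
    rewrite mult_INR, plus_INR. simpl (INR 1).
    replace (2 + L0 * sr n - (2 + (-4 * ln eps - 2 * ln (Rabs (ln eps)) + 4 * ln 2) * (INR n * (INR n + 1) / 2)))
      with (L0 * (sr n - INR n * (INR n + 1))) by (unfold L0; field).
    rewrite Rabs_mult, (Rabs_right L0) by lra.
    replace (4 * K1 * K0 / kap) with (L0 * delta) by (unfold delta, eta; field; lra).
    apply Rmult_le_compat_l; [lra|]. apply Rabs_le. lra.
Qed.
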